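(* For every $f\in\mathcal{R}$ there exists $g\in\mathcal{R}$ such that $g=(f,g)$.
   Context: $\mathcal{R}$ is the group of rational homeomorphisms of $\{0,1\}^\omega$: those $f$ for which there is a finite asynchronous binary transducer $(S,s_0,t,o)$ ($S$ finite, $t\colon S\times\{0,1\}\to S$, $o\colon S\times\{0,1\}\to\{0,1\}^*$) with $f(\psi)=o(s_0,\psi)$, where for $\sigma_1\sigma_2\cdots$ one sets $s_1=s_0$, $s_{n+1}=t(s_n,\sigma_n)$ and $o(s_0,\sigma_1\sigma_2\cdots)=o(s_1,\sigma_1)o(s_2,\sigma_2)\cdots$. For homeomorphisms $f,g$, $(f,g)$ denotes the homeomorphism with $(f,g)(0\zeta)=0f(\zeta)$ and $(f,g)(1\zeta)=1g(\zeta)$ for all $\zeta\in\{0,1\}^\omega$. *)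

(* Defs.v *)
From mathcomp Require Import all_boot.
Set Implicit Arguments. Unset Strict Implicit. Unset Printing Implicit Defensive.

(* Cantor space {0,1}^omega : infinite binary sequences, 0 ~ false, 1 ~ true. *)
Definition cantor := nat -> bool.

Definition agree (n : nat) (x y : cantor) : Prop := forall i, i < n -> x i = y i.

Definition cont (f : cantor -> cantor) : Prop :=
  forall x n, exists m, forall y, agree m x y -> agree n (f x) (f y).

Definition homeo (f : cantor -> cantor) : Prop :=
  exists g : cantor -> cantor,
    [/\ cancel f g, cancel g f, cont f & cont g].

(* states s_1 = s_0, s_{n+1} = t(s_n, sigma_n); here index i stands for s_{i+1},
   and psi i for sigma_{i+1}. *)
Fixpoint run (S : Type) (s0 : S) (t : S -> bool -> S) (psi : cantor) (n : nat) : S :=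
  match n with 0 => s0 | n'.+1 => t (run s0 t psi n') (psi n') end.

Definition out_prefix (S : Type) (s0 : S) (t : S -> bool -> S)
    (o : S -> bool -> seq bool) (psi : cantor) (n : nat) : seq bool :=
  flatten [seq o (run s0 t psi i) (psi i) | i <- iota 0 n].

(* f(psi) = o(s0, psi) : the infinite concatenation of the outputs is
   (infinite and) equal to f psi. *)
Definition computes (S : Type) (s0 : S) (t : S -> bool -> S)
    (o : S -> bool -> seq bool) (f : cantor -> cantor) : Prop :=
  forall psi,
    (forall n i, i < size (out_prefix s0 t o psi n) ->
        nth false (out_prefix s0 t o psi n) i = f psi i) /\
    (forall m, exists n, m <= size (out_prefix s0 t o psi n)).

Definition rational (f : cantor -> cantor) : Prop :=
  homeo f /\
  exists (S : finType) (s0 : S) (t : S -> bool -> S) (o : S -> bool -> seq bool),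
    computes s0 t o f.

Definition cons_c (b : bool) (x : cantor) : cantor :=
  fun n => match n with 0 => b | n'.+1 => x n' end.
Definition tail_c (x : cantor) : cantor := fun n => x n.+1.

Definition pairf (f g : cantor -> cantor) : cantor -> cantor :=
  fun psi => if psi 0 then cons_c true (g (tail_c psi))
             else cons_c false (f (tail_c psi)).

(* Main.v *)
Require Import Defs.
From mathcomp Require Import all_boot.
From Stdlib Require Import FunctionalExtensionality.

Definition Gk (f : cantor -> cantor) (x : cantor) (n k : nat) : bool :=
  if n <= k then x n else f (fun j => x (k.+1 + j)) (n - k.+1).
Definition G (f : cantor -> cantor) (x : cantor) : cantor :=
  fun n => Gk f x n (find (fun i => ~~ x i) (iota 0 n.+1)).

Lemma G0 f x : G f x 0 = x 0.
Proof. rewrite /G /Gk /=; by case: (x 0). Qed.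

Lemma GS f x n : G f x n.+1 = if x 0 then G f (tail_c x) n else f (tail_c x) n.
Proof.
have E : find (fun i => ~~ x i) (iota 0 n.+2) =
   if x 0 then (find (fun i => ~~ tail_c x i) (iota 0 n.+1)).+1 else 0.
  have -> : iota 0 n.+2 = 0 :: iota (1 + 0) n.+1 by [].
  rewrite (iotaDl 1 0) [find _ (_ :: _)]/= find_map.
  case: (x 0) => //=.
rewrite /G /Gk E; case: (x 0).
- by case: (find _ _).
- by rewrite subn1.
Qed.

Lemma G_tail_true f x : x 0 = true -> tail_c (G f x) = G f (tail_c x).
Proof. move=> h; apply: functional_extensionality => n; by rewrite /tail_c GS h. Qed.

Lemma G_tail_false f x : x 0 = false -> tail_c (G f x) = f (tail_c x).
Proof. move=> h; apply: functional_extensionality => n; by rewrite /tail_c GS h. Qed.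

Lemma G_cancel f f' : cancel f f' -> cancel (G f) (G f').
Proof.
move=> ff x; apply: functional_extensionality => n.
elim: n x => [|n IH] x; first by rewrite !G0.
rewrite GS G0; case h: (x 0).
- by rewrite (G_tail_true f _ h) IH.
- by rewrite (G_tail_false f _ h) ff.
Qed.

Lemma agreeS n a b : agree n.+1 a b <-> a 0 = b 0 /\ agree n (tail_c a) (tail_c b).
Proof.
split.
- move=> h; split; first exact: h.
  move=> i hi; exact: (h i.+1).
- move=> [h0 h] [|i] hi //; exact: h.
Qed.

Lemma G_cont f : cont f -> cont (G f).
Proof.
move=> cf x n; elim: n x => [|n IH] x.
  by exists 0 => y _ i.
case h: (x 0).
- have [m Hm] := IH (tail_c x).
  exists m.+1 => y /agreeS [h0 hy]; apply/agreeS; split; first by rewrite !G0.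
  rewrite (G_tail_true f _ h) (G_tail_true f y); last by rewrite -h0.
  exact: Hm.
- have [m Hm] := cf (tail_c x) n.
  exists m.+1 => y /agreeS [h0 hy]; apply/agreeS; split; first by rewrite !G0.
  rewrite (G_tail_false f _ h) (G_tail_false f y); last by rewrite -h0.
  exact: Hm.
Qed.

Lemma G_eq f : G f = pairf f (G f).
Proof.
apply: functional_extensionality => x; apply: functional_extensionality => n.
rewrite /pairf; case: n => [|n]; rewrite ?G0 ?GS; case: (x 0) => //.
Qed.

Lemma runS (S : Type) (s : S) t psi i :
  run s t psi i.+1 = run (t s (psi 0)) t (tail_c psi) i.
Proof. by elim: i => [|i IH] //=; rewrite -IH. Qed.

Lemma outS (S : Type) (s : S) t o psi n :
  out_prefix s t o psi n.+1 = o s (psi 0) ++ out_prefix (t s (psi 0)) t o (tail_c psi) n.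
Proof.
rewrite /out_prefix.
have -> : iota 0 n.+1 = 0 :: iota (1 + 0) n by [].
rewrite (iotaDl 1 0) /= -map_comp; congr (_ ++ flatten _).
apply: eq_map => i /=; by rewrite add0n -runS.
Qed.

Definition tS (S : Type) (s0 : S) (t : S -> bool -> S) (s : option S) (b : bool) :=
  match s with None => if b then None else Some s0 | Some s => Some (t s b) end.
Definition oS (S : Type) (o : S -> bool -> seq bool) (s : option S) (b : bool) :=
  match s with None => [:: b] | Some s => o s b end.

Arguments tS {S}.
Arguments oS {S}.

Lemma runSome (S : Type) (s0 s : S) t psi n :
  run (Some s) (tS s0 t) psi n = Some (run s t psi n).
Proof. by elim: n => [|n IH] //=; rewrite IH. Qed.

Lemma outSome (S : Type) (s0 s : S) t o psi n :
  out_prefix (Some s) (tS s0 t) (oS o) psi n = out_prefix s t o psi n.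
Proof.
rewrite /out_prefix; congr flatten; apply: eq_map => i; by rewrite runSome.
Qed.

Lemma G_computes (S : Type) (s0 : S) t o f :
  computes s0 t o f -> computes None (tS s0 t) (oS o) (G f).
Proof.
move=> cf psi; split.
- move=> n; elim: n psi => [|n IH] psi i //.
  rewrite outS /=; case: i => [|i] /=; first by rewrite G0.
  rewrite GS; case h: (psi 0) => /=.
  + exact: IH.
  + rewrite outSome => hi; exact: (cf (tail_c psi)).1.
- move=> m; elim: m psi => [|m IH] psi; first by exists 0.
  case h: (psi 0).
  + have [n Hn] := IH (tail_c psi); exists n.+1; by rewrite outS h.
  + have [n Hn] := (cf (tail_c psi)).2 m; exists n.+1; by rewrite outS h /= outSome.
Qed.

Theorem lemma2p6 (f : cantor -> cantor) :
  rational f -> exists g : cantor -> cantor, rational g /\ g = pairf f g.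
Proof.
move=> [[f' [c1 c2 cf cf']] [S [s0 [t [o hc]]]]].
exists (G f); split; last exact: G_eq.
split.
- exists (G f'); split; [exact: G_cancel | exact: G_cancel | exact: G_cont | exact: G_cont].
- exists (option S : finType), None, (tS s0 t), (oS o); exact: G_computes.
Qed.
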